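(* Let $v\in S$ be a point with at least one irrational coordinate, and suppose there is $m\ge1$ such that the tail $\mathbb{X}_{a_m},\mathbb{X}_{a_{m+1}},\dots$ of its itinerary has the property that its non-$\mathbb{A}$-type symbols alternate in type between $\mathbb{B}$ and $\mathbb{C}$ (starting with either type, or there are none). Then $G^{m-1}(v)$ lies in the union of the faces $\{z=0\}$ and $\{y=z\}$ of $S$.
   Context: Let $S = \{(x,y,z)\in\mathbb{R}^3 : 0\le z\le y\le x\le 1\}$. For integers $n\ge1$ define $\mathbb{A}_n = \{\frac1{n+1} < x \le \frac1n,\ 0\le z\le y\le 1-nx\}$, $\mathbb{B}_n = \{0\le z\le 1-nx < y \le x\}$, $\mathbb{C}_n = \{1-nx < z \le y \le x \le \frac1n\}$; together with $\{(0,0,0)\}$ they partition $S$. The 3-dimensional Gauss map $G:S\to S$ is $G(0,0,0)=(0,0,0)$, $G(x,y,z)=\left(\frac1x-n,\frac yx,\frac zx\right)$ on $\mathbb{A}_n$, $G(x,y,z)=\left(\frac{1-y}{x}-n+1,\frac{x-y+z}{x},\frac{x-y}{x}\right)$ on $\mathbb{B}_n$, $G(x,y,z)=\left(\frac{1-z}{x}-n+1,\frac{x-z}{x},\frac{y-z}{x}\right)$ on $\mathbb{C}_n$. For a point $v$ whose forward orbit never hits the origin, its itinerary is the sequence $\mathbb{X}_{a_1},\mathbb{X}_{a_2},\dots$ ($\mathbb{X}\in\{\mathbb{A},\mathbb{B},\mathbb{C}\}$) with $G^{k-1}(v)\in\mathbb{X}_{a_k}$; a symbol $\mathbb{X}_a$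 is ''of type $\mathbb{X}$''. *)

(* Defs.v *)
From Stdlib Require Import Reals Lra QArith Qreals ClassicalEpsilon.
Open Scope R_scope.

Record pt := mkpt { px : R; py : R; pz : R }.

Definition origin : pt := mkpt 0 0 0.

Definition inS (p : pt) : Prop :=
  0 <= pz p /\ pz p <= py p /\ py p <= px p /\ px p <= 1.

Definition inA (n : nat) (p : pt) : Prop :=
  (1 <= n)%nat /\ inS p /\
  1 / INR (S n) < px p /\ px p <= 1 / INR n /\
  0 <= pz p /\ pz p <= py p /\ py p <= 1 - INR n * px p.

Definition inB (n : nat) (p : pt) : Prop :=
  (1 <= n)%nat /\ inS p /\
  0 <= pz p /\ pz p <= 1 - INR n * px p /\
  1 - INR n * px p < py p /\ py p <= px p.

Definition inC (n : nat) (p : pt) : Prop :=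
  (1 <= n)%nat /\ inS p /\
  1 - INR n * px p < pz p /\ pz p <= py p /\ py p <= px p /\
  px p <= 1 / INR n.

Definition G_rel (p q : pt) : Prop :=
  (p = origin /\ q = origin) \/
  (exists n, inA n p /\
     q = mkpt (1 / px p - INR n) (py p / px p) (pz p / px p)) \/
  (exists n, inB n p /\
     q = mkpt ((1 - py p) / px p - INR n + 1)
              ((px p - py p + pz p) / px p)
              ((px p - py p) / px p)) \/
  (exists n, inC n p /\
     q = mkpt ((1 - pz p) / px p - INR n + 1)
              ((px p - pz p) / px p)
              ((py p - pz p) / px p)).

(* G p := the (unique, since A_n, B_n, C_n, {0} partition S) image of p.
   Outside S the value is irrelevant. *)
Definition G (p : pt) : pt :=
  epsilon (inhabits origin) (fun q => G_rel p q).

Definition Giter (k : nat) (v : pt) : pt := Nat.iter k G v.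

Definition typeA (p : pt) : Prop := exists n, inA n p.
Definition typeB (p : pt) : Prop := exists n, inB n p.
Definition typeC (p : pt) : Prop := exists n, inC n p.

Definition irrational (r : R) : Prop := ~ exists q : Q, Q2R q = r.

(* The tail of the itinerary starting at index m (symbols X_{a_m}, X_{a_{m+1}}, ...,
   i.e. the points G^{k}(v) for k >= m-1) has its non-A-type symbols alternating
   between types B and C: any two consecutive non-A symbols have different types. *)
Definition tail_alternates (v : pt) (m : nat) : Prop :=
  forall i j : nat, (m - 1 <= i)%nat -> (i < j)%nat ->
    (forall l, (i < l < j)%nat -> typeA (Giter l v)) ->
    ((typeB (Giter i v) /\ typeB (Giter j v)) -> False) /\
    ((typeC (Giter i v) /\ typeC (Giter j v)) -> False).

(* Main.v *)
Require Import Defs.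
From Stdlib Require Import Reals QArith Qreals.
From Stdlib Require Import Lra Lia Psatz ZArith ClassicalEpsilon Classical.
Open Scope R_scope.

Lemma inv_lt (a x : R) : 0 < a -> 1 < a * x -> 1 / a < x.
Proof. intros Ha H. assert (E: a * (1/a) = 1) by (field; lra). nra. Qed.
Lemma inv_le (a x : R) : 0 < a -> a * x <= 1 -> x <= 1 / a.
Proof. intros Ha H. assert (E: a * (1/a) = 1) by (field; lra). nra. Qed.
Lemma lt_inv (a x : R) : 0 < a -> 1 / a < x -> 1 < a * x.
Proof. intros Ha H. assert (E: a * (1/a) = 1) by (field; lra). nra. Qed.
Lemma le_inv (a x : R) : 0 < a -> x <= 1 / a -> a * x <= 1.
Proof. intros Ha H. assert (E: a * (1/a) = 1) by (field; lra). nra. Qed.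

Lemma xpos (p : pt) : inS p -> p <> origin -> 0 < px p.
Proof.
  destruct p as [x y z]. unfold inS; simpl. intros (H1 & H2 & H3 & H4) Hne.
  destruct (Req_dec x 0) as [E|E]; [|lra].
  exfalso. apply Hne. unfold origin. f_equal; lra.
Qed.

Lemma region (p : pt) : inS p -> p <> origin ->
  exists n, inA n p \/ inB n p \/ inC n p.
Proof.
  intros HS Hne. pose proof (xpos p HS Hne) as Hx.
  destruct p as [x y z]. unfold inS in HS; simpl in *. destruct HS as (H1 & H2 & H3 & H4).
  set (r := 1 / x).
  assert (Hr : x * r = 1) by (unfold r; field; lra).
  assert (Hr1 : 1 <= r) by nra.
  destruct (archimed r) as [Hu1 Hu2].
  set (k := up r) in *.
  assert (Hk : (2 <= k)%Z).
  { assert (1 < k)%Z by (apply lt_IZR; lra). lia. }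
  assert (Hk2 : 2 <= IZR k) by (apply IZR_le in Hk; exact Hk).
  set (n := Z.to_nat (k - 1)).
  assert (HN : INR n = IZR k - 1).
  { unfold n. rewrite INR_IZR_INZ, Z2Nat.id by lia. rewrite minus_IZR. reflexivity. }
  assert (Hn1 : (1 <= n)%nat) by (unfold n; lia).
  assert (HN1 : 1 <= INR n) by lra.
  assert (HNx1 : INR n * x <= 1) by nra.
  assert (HNx2 : 1 < (INR n + 1) * x) by nra.
  assert (HS : INR (S n) = INR n + 1) by (rewrite S_INR; reflexivity).
  assert (HA1 : 1 / INR (S n) < x) by (rewrite HS; apply inv_lt; lra).
  assert (HA2 : x <= 1 / INR n) by (apply inv_le; lra).
  exists n.
  destruct (Rle_dec y (1 - INR n * x)).
  - left. unfold inA, inS; cbn [px py pz]. repeat split; try exact Hn1; lra.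
  - destruct (Rle_dec z (1 - INR n * x)).
    + right; left. unfold inB, inS; cbn [px py pz]. repeat split; try exact Hn1; lra.
    + right; right. unfold inC, inS; cbn [px py pz]. repeat split; try exact Hn1; lra.
Qed.

Lemma Grel_exists p : inS p -> p <> origin -> G_rel p (G p).
Proof.
  intros HS Hne. unfold G. apply epsilon_spec.
  destruct (region p HS Hne) as [n [H|[H|H]]].
  - eexists. right; left. exists n; split; [exact H|reflexivity].
  - eexists. right; right; left. exists n; split; [exact H|reflexivity].
  - eexists. right; right; right. exists n; split; [exact H|reflexivity].
Qed.

Lemma step p : inS p -> p <> origin ->
  0 < px p /\ inS (G p) /\
  ((typeA p /\ px p * px (G p) <= 1 - px p /\ px p * pz (G p) = pz p /\
      px p * (py (G p) - pz (G p)) = py p - pz p) \/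
   (typeB p /\ px p * px (G p) <= 1 - py p /\ px p * (py (G p) - pz (G p)) = pz p) \/
   (typeC p /\ px p * px (G p) <= 1 - pz p /\ px p * pz (G p) = py p - pz p)).
Proof.
  intros HS Hne. pose proof (Grel_exists p HS Hne) as HG.
  pose proof (xpos p HS Hne) as Hx.
  set (q := G p) in *. clearbody q.
  destruct HG as [[E _]|[[n [H E]]|[[n [H E]]|[n [H E]]]]].
  - contradiction.
  - pose proof H as H0.
    destruct p as [x y z]; subst q; unfold inA, inS in H; simpl in *.
    destruct H as (Hn & (S1&S2&S3&S4) & A1 & A2 & A3 & A4 & A5).
    assert (HN: 1 <= INR n) by (replace 1 with (INR 1) by reflexivity; apply le_INR; exact Hn).
    assert (B1 : 1 < INR (S n) * x) by (apply lt_inv; [apply lt_0_INR; lia| exact A1]).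
    rewrite S_INR in B1.
    assert (E1 : x * (1 / x - INR n) = 1 - INR n * x) by (field; lra).
    assert (E2 : x * (y / x) = y) by (field; lra).
    assert (E3 : x * (z / x) = z) by (field; lra).
    generalize dependent (1 / x - INR n). generalize dependent (y / x).
    generalize dependent (z / x). set (N := INR n) in *. intros c E3 b E2 a E1.
    split; [exact Hx|]. split.
    + unfold inS; simpl. repeat split; nra.
    + left. split; [exists n; exact H0|]. simpl. split; [nra|]. split; [lra|]. nra.
  - pose proof H as H0.
    destruct p as [x y z]; subst q; unfold inB, inS in H; simpl in *.
    destruct H as (Hn & (S1&S2&S3&S4) & A1 & A2 & A3 & A4).
    assert (HN: 1 <= INR n) by (replace 1 with (INR 1) by reflexivity; apply le_INR; exact Hn).
    assert (E1 : x * ((1 - y) / x - INR n + 1) = 1 - y - INR n * x + x) by (field; lra).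
    assert (E2 : x * ((x - y + z) / x) = x - y + z) by (field; lra).
    assert (E3 : x * ((x - y) / x) = x - y) by (field; lra).
    generalize dependent ((1 - y) / x - INR n + 1). generalize dependent ((x - y + z) / x).
    generalize dependent ((x - y) / x). set (N := INR n) in *. intros c E3 b E2 a E1.
    split; [exact Hx|]. split.
    + unfold inS; simpl. repeat split; nra.
    + right; left. split; [exists n; exact H0|]. simpl. split; nra.
  - pose proof H as H0.
    destruct p as [x y z]; subst q; unfold inC, inS in H; simpl in *.
    destruct H as (Hn & (S1&S2&S3&S4) & A1 & A2 & A3 & A4).
    assert (HN: 1 <= INR n) by (replace 1 with (INR 1) by reflexivity; apply le_INR; exact Hn).
    assert (B2 : INR n * x <= 1) by (apply le_inv; [lra|exact A4]).
    assert (E1 : x * ((1 - z) / x - INR n + 1) = 1 - z - INR n * x + x) by (field; lra).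
    assert (E2 : x * ((x - z) / x) = x - z) by (field; lra).
    assert (E3 : x * ((y - z) / x) = y - z) by (field; lra).
    generalize dependent ((1 - z) / x - INR n + 1). generalize dependent ((x - z) / x).
    generalize dependent ((y - z) / x). set (N := INR n) in *. intros c E3 b E2 a E1.
    split; [exact Hx|]. split.
    + unfold inS; simpl. repeat split; nra.
    + right; right. split; [exists n; exact H0|]. simpl. split; nra.
Qed.

Fixpoint aa (p : nat -> pt) (k : nat) : R :=
  match k with O => 1 | S k' => aa p k' * px (p k') end.

Lemma core (p : nat -> pt) :
  (forall k, inS (p k) /\ p k <> origin) ->
  (forall k, p (S k) = G (p k)) ->
  (forall i j, (i < j)%nat -> (forall l, (i < l < j)%nat -> typeA (p l)) ->
      ((typeB (p i) /\ typeB (p j)) -> False) /\ ((typeC (p i) /\ typeC (p j)) -> False)) ->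
  0 < pz (p 0%nat) -> 0 < py (p 0%nat) - pz (p 0%nat) -> False.
Proof.
  intros Hp Hsucc Halt Hz Hw.
  set (c := Rmin (pz (p 0%nat)) (py (p 0%nat) - pz (p 0%nat))).
  assert (Hc : 0 < c) by (apply Rmin_glb_lt; lra).
  assert (Hc1 : c <= pz (p 0%nat)) by apply Rmin_l.
  assert (Hc2 : c <= py (p 0%nat) - pz (p 0%nat)) by apply Rmin_r.
  clearbody c.
  assert (Hst : forall k, 0 < px (p k) /\
   ((typeA (p k) /\ px (p k) * px (p (S k)) <= 1 - px (p k) /\ px (p k) * pz (p (S k)) = pz (p k) /\
      px (p k) * (py (p (S k)) - pz (p (S k))) = py (p k) - pz (p k)) \/
   (typeB (p k) /\ px (p k) * px (p (S k)) <= 1 - py (p k) /\ px (p k) * (py (p (S k)) - pz (p (S k))) = pz (p k)) \/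
   (typeC (p k) /\ px (p k) * px (p (S k)) <= 1 - pz (p k) /\ px (p k) * pz (p (S k)) = py (p k) - pz (p k)))).
  { intro k. rewrite Hsucc. destruct (Hp k) as [H1 H2].
    destruct (step (p k) H1 H2) as [A [_ B]]. split; assumption. }
  assert (HS : forall k, inS (p k)) by (intro k; apply Hp).
  assert (Hpos : forall k, 0 < aa p k).
  { induction k; simpl; [lra|]. destruct (Hst k) as [Hx _]. nra. }
  assert (Hmono : forall k, aa p (S k) <= aa p k).
  { intro k. simpl. destruct (HS k) as (_&_&_&H4). pose proof (Hpos k). nra. }
  assert (TZ : forall k, aa p (S k) * pz (p (S k)) = aa p k * (px (p k) * pz (p (S k)))).
  { intro k; simpl; ring. }
  assert (TW : forall k, aa p (S k) * (py (p (S k)) - pz (p (S k))) =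
                         aa p k * (px (p k) * (py (p (S k)) - pz (p (S k))))).
  { intro k; simpl; ring. }
  assert (T2 : forall k, aa p (S (S k)) = aa p k * (px (p k) * px (p (S k)))).
  { intro k; simpl; ring. }
  assert (Inv : forall k,
    ((forall l, (l < k)%nat -> typeA (p l)) /\ c <= aa p k * pz (p k) /\ c <= aa p k * (py (p k) - pz (p k)))
    \/ ((exists i, (i < k)%nat /\ typeC (p i) /\ forall l, (i < l < k)%nat -> typeA (p l)) /\ c <= aa p k * pz (p k))
    \/ ((exists i, (i < k)%nat /\ typeB (p i) /\ forall l, (i < l < k)%nat -> typeA (p l)) /\ c <= aa p k * (py (p k) - pz (p k)))).
  { induction k.
    - left. simpl. split; [intros; lia|]. lra.
    - destruct (Hst k) as [Hx [[TA [P1 [E1 E2]]]|[[TB [P1 E1]]|[TC [P1 E1]]]]];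
      destruct IHk as [[N1 [N2 N3]]|[[[i [Hi [Ti Hl]]] Z1]|[[i [Hi [Ti Hl]]] W1]]].
      + left. split; [|split].
        * intros l Hl. destruct (Nat.eq_dec l k); [subst; auto| apply N1; lia].
        * rewrite TZ, E1; lra.
        * rewrite TW, E2; lra.
      + right; left. split.
        * exists i. split; [lia|split; [auto|]]. intros l Hl'.
          destruct (Nat.eq_dec l k); [subst; auto| apply Hl; lia].
        * rewrite TZ, E1; lra.
      + right; right. split.
        * exists i. split; [lia|split; [auto|]]. intros l Hl'.
          destruct (Nat.eq_dec l k); [subst; auto| apply Hl; lia].
        * rewrite TW, E2; lra.
      + right; right. split.
        * exists k. split; [lia|split; [auto|]]. intros; lia.
        * rewrite TW, E1; lra.
      + right; right. split.
        * exists k. split; [lia|split; [auto|]]. intros; lia.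
        * rewrite TW, E1; lra.
      + exfalso. apply (proj1 (Halt i k Hi Hl)). auto.
      + right; left. split.
        * exists k. split; [lia|split; [auto|]]. intros; lia.
        * rewrite TZ, E1; lra.
      + exfalso. apply (proj2 (Halt i k Hi Hl)). auto.
      + right; left. split.
        * exists k. split; [lia|split; [auto|]]. intros; lia.
        * rewrite TZ, E1; lra. }
  assert (Good : forall k, c <= aa p k * pz (p k) -> aa p (S (S k)) <= aa p k - c).
  { intros k Hk. rewrite T2. pose proof (Hpos k) as Ha. destruct (HS k) as (S1&S2&S3&S4).
    destruct (Hst k) as [Hx [[TA [P1 _]]|[[TB [P1 _]]|[TC [P1 _]]]]].
    - assert (aa p k * (px (p k) * px (p (S k))) <= aa p k * (1 - px (p k))) by (apply Rmult_le_compat_l; lra).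
      assert (aa p k * pz (p k) <= aa p k * px (p k)) by (apply Rmult_le_compat_l; lra). lra.
    - assert (aa p k * (px (p k) * px (p (S k))) <= aa p k * (1 - py (p k))) by (apply Rmult_le_compat_l; lra).
      assert (aa p k * pz (p k) <= aa p k * py (p k)) by (apply Rmult_le_compat_l; lra). lra.
    - assert (aa p k * (px (p k) * px (p (S k))) <= aa p k * (1 - pz (p k))) by (apply Rmult_le_compat_l; lra).
      lra. }
  assert (Good2 : forall k, c <= aa p k * (py (p k) - pz (p k)) ->
     aa p (S (S k)) <= aa p k - c \/ c <= aa p (S k) * pz (p (S k))).
  { intros k Hk. pose proof (Hpos k) as Ha. destruct (HS k) as (S1&S2&S3&S4).
    destruct (Hst k) as [Hx [[TA [P1 _]]|[[TB [P1 _]]|[TC [P1 E1]]]]].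
    - left. rewrite T2.
      assert (aa p k * (px (p k) * px (p (S k))) <= aa p k * (1 - px (p k))) by (apply Rmult_le_compat_l; lra).
      assert (aa p k * (py (p k) - pz (p k)) <= aa p k * px (p k)) by (apply Rmult_le_compat_l; lra). lra.
    - left. rewrite T2.
      assert (aa p k * (px (p k) * px (p (S k))) <= aa p k * (1 - py (p k))) by (apply Rmult_le_compat_l; lra).
      assert (aa p k * (py (p k) - pz (p k)) <= aa p k * py (p k)) by (apply Rmult_le_compat_l; lra). lra.
    - right. rewrite TZ, E1. exact Hk. }
  assert (Dec3 : forall k, aa p (S (S (S k))) <= aa p k - c).
  { intro k. pose proof (Hmono (S (S k))).
    destruct (Inv k) as [[_ [H1 _]]|[[_ H1]|[_ H1]]].
    - pose proof (Good k H1). lra.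
    - pose proof (Good k H1). lra.
    - destruct (Good2 k H1) as [H2|H2].
      + lra.
      + pose proof (Good (S k) H2). pose proof (Hmono k). lra. }
  assert (Lin : forall j, aa p (3 * j) <= 1 - INR j * c).
  { induction j.
    - simpl. lra.
    - replace (3 * S j)%nat with (S (S (S (3 * j)))) by lia.
      rewrite S_INR. pose proof (Dec3 (3 * j)%nat). lra. }
  destruct (archimed_cor1 c Hc) as [N [HN1 HN2]].
  assert (HNp : 0 < INR N) by (apply lt_0_INR; lia).
  assert (1 < INR N * c).
  { assert (E : INR N * / INR N = 1) by (field; lra). nra. }
  pose proof (Lin N). pose proof (Hpos (3 * N)%nat). lra.
Qed.

Theorem mainTheorem17 (v : pt) (m : nat) :
  inS v ->
  (irrational (px v) \/ irrational (py v) \/ irrational (pz v)) ->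
  (forall k : nat, Giter k v <> origin) ->
  (1 <= m)%nat ->
  tail_alternates v m ->
  pz (Giter (m - 1) v) = 0 \/ py (Giter (m - 1) v) = pz (Giter (m - 1) v).
Proof.
  intros HS _ Hno Hm Halt.
  assert (HSk : forall k, inS (Giter k v)).
  { induction k; [exact HS|]. change (Giter (S k) v) with (G (Giter k v)).
    apply (step _ IHk (Hno k)). }
  destruct (Req_dec (pz (Giter (m - 1) v)) 0) as [E|Hz]; [left; exact E|].
  destruct (Req_dec (py (Giter (m - 1) v)) (pz (Giter (m - 1) v))) as [E|Hw]; [right; exact E|].
  exfalso.
  destruct (HSk (m - 1)%nat) as (S1&S2&S3&S4).
  apply (core (fun k => Giter (k + (m - 1)) v)).
  - intro k. split; auto.
  - intro k. reflexivity.
  - intros i j Hij Hl. apply (Halt (i + (m - 1))%nat (j + (m - 1))%nat); try lia.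
    intros l Hl'. replace l with (l - (m - 1) + (m - 1))%nat by lia. apply Hl; lia.
  - change (0 + (m - 1))%nat with (m - 1)%nat. lra.
  - change (0 + (m - 1))%nat with (m - 1)%nat. lra.
Qed.
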